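(* Let $f({\bf X})=\sum_{k=1}^{K}\alpha_k g_k({\bf X}^{\mathrm H}{\bf A}_k{\bf X})$ be a generalized quadratic matrix function on $\mathbb{C}^{n\times r}$ and ${\bf X}_0\in\mathbb{C}^{n\times r}$. Define $$\bar f({\bf X};{\bf X}_0)=\sum_{k:\alpha_k>0}\alpha_k\, l_k({\bf X};{\bf X}_0)+\sum_{k:\alpha_k<0}\alpha_k\, u_k({\bf X};{\bf X}_0),$$ where $l_k$ and $u_k$ are the lower and upper bound functions associated with $(g_k,{\bf A}_k,{\bf X}_0)$. Then $\bar f(\cdot;{\bf X}_0)$ is concave on $\mathbb{C}^{n\times r}$, $\bar f({\bf X};{\bf X}_0)\le f({\bf X})$ for all ${\bf X}$, $\bar f({\bf X}_0;{\bf X}_0)=f({\bf X}_0)$, and $\bar f(\cdot;{\bf X}_0)$ and $f$ have the same (real Fréchet) derivative at ${\bf X}_0$.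
   Context: $\mathbb{H}^m$: real vector space of $m\times m$ complex Hermitian matrices, inner product $\mathrm{tr}({\bf U}{\bf V})$; ${\bf U}\succeq{\bf V}$ means ${\bf U}-{\bf V}$ is positive semidefinite. For ${\bf A}\in\mathbb{H}^n$ with eigen-decomposition $\sum_i\lambda_i{\bf u}_i{\bf u}_i^{\mathrm H}$, ${\bf A}^{(+)}=\sum_{\lambda_i>0}\lambda_i{\bf u}_i{\bf u}_i^{\mathrm H}$, ${\bf A}^{(-)}=\sum_{\lambda_i<0}\lambda_i{\bf u}_i{\bf u}_i^{\mathrm H}$. $g:\mathbb{H}^r\to\mathbb{R}$ is MND if ${\bf W}_1\succeq{\bf W}_2\Rightarrow g({\bf W}_1)\ge g({\bf W}_2)$ and MNI if ${\bf W}_1\succeq{\bf W}_2\Rightarrow g({\bf W}_1)\le g({\bf W}_2)$; $\mathcal{G}$ is the family of differentiable convex $g:\mathbb{H}^r\to\mathbb{R}$ that are MND or MNI; $\nabla g({\bf W}_0)\in\mathbb{H}^r$ is the gradient w.r.t. $\mathrm{tr}({\bf U}{\bf V})$. A generalized quadratic matrix function is $f({\bf X})=\sum_{k=1}^K\alpha_k g_k({\bf X}^{\mathrm H}{\bf A}_k{\bf X})$ with $\alpha_k\in\mathbb{R}$, ${\bf A}_k\in\mathbb{H}^n$, $g_k\in\mathcal{G}$. For $(g,{\bf A},{\bf X}_0)$ with ${\bf W}_0={\bf X}_0^{\mathrm H}{\bf A}{\bf X}_0$, ${\bf G}=\nabla g({\bf W}_0)$: the lower bound function is $l({\bf X};{\bf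 X}_0)=\mathrm{tr}({\bf L}({\bf X}){\bf G})+g({\bf W}_0)-\mathrm{tr}({\bf W}_0{\bf G})$, where ${\bf L}({\bf X})={\bf X}^{\mathrm H}{\bf A}^{(-)}{\bf X}+{\bf X}^{\mathrm H}{\bf A}^{(+)}{\bf X}_0+{\bf X}_0^{\mathrm H}{\bf A}^{(+)}{\bf X}-{\bf X}_0^{\mathrm H}{\bf A}^{(+)}{\bf X}_0$ if $g$ is MND and ${\bf L}({\bf X})={\bf X}^{\mathrm H}{\bf A}^{(+)}{\bf X}+{\bf X}^{\mathrm H}{\bf A}^{(-)}{\bf X}_0+{\bf X}_0^{\mathrm H}{\bf A}^{(-)}{\bf X}-{\bf X}_0^{\mathrm H}{\bf A}^{(-)}{\bf X}_0$ if $g$ is MNI; the upper bound function is $u({\bf X};{\bf X}_0)=g\big({\bf X}^{\mathrm H}{\bf A}^{(+)}{\bf X}+{\bf X}^{\mathrm H}{\bf A}^{(-)}{\bf X}_0+{\bf X}_0^{\mathrm H}{\bf A}^{(-)}{\bf X}-{\bf X}_0^{\mathrm H}{\bf A}^{(-)}{\bf X}_0\big)$ if $g$ is MND and $u({\bf X};{\bf X}_0)=g\big({\bf X}^{\mathrm H}{\bf A}^{(-)}{\bf X}+{\bf X}^{\mathrm H}{\bf A}^{(+)}{\bf X}_0+{\bf X}_0^{\mathrm H}{\bf A}^{(+)}{\bf X}-{\bf X}_0^{\mathrm H}{\bf A}^{(+)}{\bf X}_0\big)$ if $g$ is MNI. *)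

(* Defs.v *)
From HB Require Import structures.
From mathcomp Require Import all_boot all_order all_algebra.
From mathcomp Require Import complex sesquilinear spectral.
From mathcomp Require Import reals.
Set Implicit Arguments.
Unset Strict Implicit.
Unset Printing Implicit Defensive.
Import Order.TTheory GRing.Theory Num.Theory.
Local Open Scope ring_scope.

Section GQMF.
Variable R : realType.
Local Notation C := (R[i]).

Definition rC (a : R) : C := (a%:C)%C.

Definition cH m p (X : 'M[C]_(m, p)) : 'M[C]_(p, m) := (X ^t*)%sesqui.

Definition is_herm m (A : 'M[C]_m) : bool := A \is hermsymmx.

(* positive semidefinite: Hermitian and x^H A x >= 0 (i.e. real and >= 0) *)
Definition psd m (A : 'M[C]_m) : Prop :=
  is_herm A /\ forall x : 'cV[C]_m, 0 <= (cH x *m A *m x) 0 0.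

Definition loewner_ge m (U V : 'M[C]_m) : Prop := psd (U - V).

(* A^(+) and A^(-) from an eigendecomposition A = P^-1 diag(d) P, P unitary
   (spectral theorem of mathcomp's spectral.v) *)
Definition pos_part m (A : 'M[C]_m) : 'M[C]_m :=
  invmx (spectralmx A) *m
  diag_mx (map_mx (fun c : C => if 0 < c then c else 0) (spectral_diag A)) *m
  spectralmx A.
Definition neg_part m (A : 'M[C]_m) : 'M[C]_m :=
  invmx (spectralmx A) *m
  diag_mx (map_mx (fun c : C => if c < 0 then c else 0) (spectral_diag A)) *m
  spectralmx A.

(* Frobenius norm on C^{m x p} viewed as the real space R^{2mp} *)
Definition fnorm m p (X : 'M[C]_(m, p)) : R :=
  Num.sqrt (\sum_(i < m) \sum_(j < p)
              ((complex.Re (X i j)) ^+ 2 + (complex.Im (X i j)) ^+ 2)).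

(* real inner product tr(U V) on Hermitian matrices (real part; it is real there) *)
Definition rtr m (U V : 'M[C]_m) : R := complex.Re (\tr (U *m V)).

Definition rlinear m p (D : 'M[C]_(m, p) -> R) : Prop :=
  (forall X Y, D (X + Y) = D X + D Y) /\ (forall a X, D (rC a *: X) = a * D X).

Definition has_fderiv m p (f : 'M[C]_(m, p) -> R) (X0 : 'M[C]_(m, p))
  (D : 'M[C]_(m, p) -> R) : Prop :=
  rlinear D /\
  forall eps : R, 0 < eps -> exists2 delta : R, 0 < delta &
    forall H, fnorm H < delta -> `|f (X0 + H) - f X0 - D H| <= eps * fnorm H.

Definition is_gradient m (g : 'M[C]_m -> R) (W0 G : 'M[C]_m) : Prop :=
  is_herm G /\
  forall eps : R, 0 < eps -> exists2 delta : R, 0 < delta &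
    forall H, is_herm H -> fnorm H < delta ->
      `|g (W0 + H) - g W0 - rtr H G| <= eps * fnorm H.

Definition convex_herm m (g : 'M[C]_m -> R) : Prop :=
  forall W1 W2 (t : R), is_herm W1 -> is_herm W2 -> 0 <= t -> t <= 1 ->
    g (rC t *: W1 + rC (1 - t) *: W2) <= t * g W1 + (1 - t) * g W2.

Definition MND m (g : 'M[C]_m -> R) : Prop :=
  forall W1 W2, is_herm W1 -> is_herm W2 -> loewner_ge W1 W2 -> g W2 <= g W1.
Definition MNI m (g : 'M[C]_m -> R) : Prop :=
  forall W1 W2, is_herm W1 -> is_herm W2 -> loewner_ge W1 W2 -> g W1 <= g W2.

Definition in_family m (g : 'M[C]_m -> R) (Dg : 'M[C]_m -> 'M[C]_m) (mnd : bool)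
  : Prop :=
  convex_herm g /\ (forall W, is_herm W -> is_gradient g W (Dg W)) /\
  (if mnd then MND g else MNI g).

Definition gqmf n r K (alpha : 'I_K -> R) (A : 'I_K -> 'M[C]_n)
  (g : 'I_K -> 'M[C]_r -> R) (X : 'M[C]_(n, r)) : R :=
  \sum_(k < K) alpha k * g k (cH X *m A k *m X).

Definition Lmat n r (mnd : bool) (A : 'M[C]_n) (X0 X : 'M[C]_(n, r)) : 'M[C]_r :=
  if mnd then
    cH X *m neg_part A *m X + cH X *m pos_part A *m X0
    + cH X0 *m pos_part A *m X - cH X0 *m pos_part A *m X0
  else
    cH X *m pos_part A *m X + cH X *m neg_part A *m X0
    + cH X0 *m neg_part A *m X - cH X0 *m neg_part A *m X0.

Definition lowerb n r (g : 'M[C]_r -> R) (Dg : 'M[C]_r -> 'M[C]_r) (mnd : bool)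
  (A : 'M[C]_n) (X0 X : 'M[C]_(n, r)) : R :=
  let W0 := cH X0 *m A *m X0 in
  let G := Dg W0 in
  rtr (Lmat mnd A X0 X) G + g W0 - rtr W0 G.

Definition upperb n r (g : 'M[C]_r -> R) (mnd : bool)
  (A : 'M[C]_n) (X0 X : 'M[C]_(n, r)) : R :=
  if mnd then
    g (cH X *m pos_part A *m X + cH X *m neg_part A *m X0
       + cH X0 *m neg_part A *m X - cH X0 *m neg_part A *m X0)
  else
    g (cH X *m neg_part A *m X + cH X *m pos_part A *m X0
       + cH X0 *m pos_part A *m X - cH X0 *m pos_part A *m X0).

Definition fbar n r K (alpha : 'I_K -> R) (A : 'I_K -> 'M[C]_n)
  (g : 'I_K -> 'M[C]_r -> R) (Dg : 'I_K -> 'M[C]_r -> 'M[C]_r)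
  (mnd : 'I_K -> bool) (X0 X : 'M[C]_(n, r)) : R :=
  \sum_(k < K | 0 < alpha k) alpha k * lowerb (g k) (Dg k) (mnd k) (A k) X0 X
  + \sum_(k < K | alpha k < 0) alpha k * upperb (g k) (mnd k) (A k) X0 X.

Definition concave_on m p (h : 'M[C]_(m, p) -> R) : Prop :=
  forall X Y (t : R), 0 <= t -> t <= 1 ->
    t * h X + (1 - t) * h Y <= h (rC t *: X + rC (1 - t) *: Y).

End GQMF.

(* Main.v *)
Require Import Defs.
From HB Require Import structures.
From mathcomp Require Import all_boot all_order all_algebra.
From mathcomp Require Import complex sesquilinear spectral.
From mathcomp Require Import reals.
Import Order.TTheory GRing.Theory Num.Theory.
Local Open Scope ring_scope.

From mathcomp Require Import ring lra.
Set Implicit Arguments.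
Unset Strict Implicit.
Unset Printing Implicit Defensive.

Ltac genmx := repeat match goal with |- context [?A *m ?B] => let x := fresh "x" in set x := (A *m B); clearbody x end.
Ltac mxring := genmx; apply/matrixP => i j; rewrite !mxE; ring.
Section S.
Variable R : realType.
Local Notation C := (R[i]).
Implicit Types (a : R).

Lemma conj_rC a : (rC a)^* = rC a :> C.
Proof. exact: conjc_real. Qed.

Lemma cH_mul m p q (A : 'M[C]_(m,p)) (B : 'M[C]_(p,q)) : cH (A *m B) = cH B *m cH A.
Proof. by rewrite /cH trmx_mul map_mxM. Qed.

Lemma cHK m p (A : 'M[C]_(m,p)) : cH (cH A) = A.
Proof. exact: trmxCK. Qed.

Lemma cHD m p (A B : 'M[C]_(m,p)) : cH (A + B) = cH A + cH B.
Proof. by rewrite /cH linearD map_mxD. Qed.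

Lemma cHN m p (A : 'M[C]_(m,p)) : cH (- A) = - cH A.
Proof. by rewrite /cH linearN map_mxN. Qed.

Lemma cHB m p (A B : 'M[C]_(m,p)) : cH (A - B) = cH A - cH B.
Proof. by rewrite cHD cHN. Qed.

Lemma cHZ m p a (A : 'M[C]_(m,p)) : cH (rC a *: A) = rC a *: cH A.
Proof. by rewrite /cH linearZ /= map_mxZ; congr (_ *: _); exact: conjc_real. Qed.

Lemma cH0 m p : cH (0 : 'M[C]_(m,p)) = 0.
Proof. by rewrite /cH trmx0 map_mx0. Qed.

Lemma hermP m (M : 'M[C]_m) : is_herm M <-> cH M = M.
Proof.
split => [/is_hermitianmxP|H]; first by rewrite expr0 scale1r /cH => {2}->.
by apply/is_hermitianmxP; rewrite expr0 scale1r -{1}H.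
Qed.
Lemma cH_diag m (d : 'rV[C]_m) : (forall i, d 0 i \is Num.real) -> cH (diag_mx d) = diag_mx d.
Proof.
move=> Hd; apply/matrixP => i j; rewrite !mxE.
case: (eqVneq i j) => [->|ne]; first by rewrite !mulr1n conj_Creal.
by rewrite !mulr0n conjC0.
Qed.

Lemma psd_diag_conj m (P : 'M[C]_m) (d : 'rV[C]_m) :
  (forall i, 0 <= d 0 i) -> psd (cH P *m diag_mx d *m P).
Proof.
move=> Hd; split.
  apply/hermP; rewrite !cH_mul cHK cH_diag ?mulmxA // => i.
  exact: ger0_real.
move=> x; rewrite -!mulmxA mulmxA -cH_mul.
set y := P *m x.
rewrite mul_diag_mx !mxE; apply: sumr_ge0 => i _; rewrite !mxE.
by rewrite mulrCA; apply: mulr_ge0 => //; rewrite mulrC mul_conjC_ge0.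
Qed.

Lemma pos_partE m (A : 'M[C]_m) : pos_part A =
  cH (spectralmx A) *m diag_mx (map_mx (fun c : C => if 0 < c then c else 0) (spectral_diag A)) *m spectralmx A.
Proof. by rewrite /pos_part invmx_unitary // spectral_unitarymx. Qed.

Lemma neg_partE m (A : 'M[C]_m) : neg_part A =
  cH (spectralmx A) *m diag_mx (map_mx (fun c : C => if c < 0 then c else 0) (spectral_diag A)) *m spectralmx A.
Proof. by rewrite /neg_part invmx_unitary // spectral_unitarymx. Qed.

Lemma pos_psd m (A : 'M[C]_m) : psd (pos_part A).
Proof.
rewrite pos_partE; apply: psd_diag_conj => i; rewrite mxE.
by case: ifP => // /ltW.
Qed.

Lemma neg_nsd m (A : 'M[C]_m) : psd (- neg_part A).
Proof.
rewrite neg_partE -mulNmx -mulmxN -linearN /=.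
apply: psd_diag_conj => i; rewrite !mxE.
by case: ifP => [/ltW|_]; rewrite ?oppr0 // oppr_ge0.
Qed.

Lemma pos_neg m (A : 'M[C]_m) : is_herm A -> pos_part A + neg_part A = A.
Proof.
move=> HA.
have /orthomx_spectralP E := hermitian_normalmx HA.
have Hr := hermitian_spectral_diag_real HA.
rewrite pos_partE neg_partE -mulmxDl -mulmxDr -linearD /=.
set d := spectral_diag A.
have -> : map_mx (fun c : C => if 0 < c then c else 0) d + map_mx (fun c : C => if c < 0 then c else 0) d = d.
  apply/matrixP => i j; rewrite !mxE.
  have := mxOverP Hr i j; rewrite -/d; set c := d i j => cr.
  by case: (real_ltgt0P cr) => [c0|c0|c0]; rewrite ?addr0 ?add0r // -c0 addr0.
by rewrite /cH -invmx_unitary ?spectral_unitarymx //.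
Qed.
Definition Mq n r (Q B : 'M[C]_n) (X0 X : 'M[C]_(n,r)) : 'M[C]_r :=
  cH X *m Q *m X + cH X *m B *m X0 + cH X0 *m B *m X - cH X0 *m B *m X0.

Lemma MqE n r (Q B : 'M[C]_n) (X0 X : 'M[C]_(n,r)) :
  Mq Q B X0 X = cH X *m (Q + B) *m X - cH (X - X0) *m B *m (X - X0).
Proof.
rewrite /Mq !(cHD, cHB, mulmxDl, mulmxDr, mulmxBl, mulmxBr).
rewrite !(cHN, mulmxN, mulNmx). mxring.
Qed.

Lemma rC1B t : rC (1 - t) = 1 - rC t :> C.
Proof. by rewrite /rC rmorphB rmorph1. Qed.
Lemma rCM a b : rC (a * b) = rC a * rC b :> C.
Proof. by rewrite /rC rmorphM. Qed.

Lemma Mq_conv n r (Q B : 'M[C]_n) (X0 X Y : 'M[C]_(n,r)) t :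
  rC t *: Mq Q B X0 X + rC (1 - t) *: Mq Q B X0 Y - Mq Q B X0 (rC t *: X + rC (1 - t) *: Y)
  = rC (t * (1 - t)) *: (cH (X - Y) *m Q *m (X - Y)).
Proof.
rewrite /Mq !(cHD, cHB, cHN, cHZ, mulmxDl, mulmxDr, mulmxBl, mulmxBr, mulmxN, mulNmx).
rewrite -!(scalemxAl, scalemxAr).
rewrite rCM rC1B. move: (rC t) => s. mxring.
Qed.

Lemma Mq_shift n r (Q B : 'M[C]_n) (X0 H : 'M[C]_(n,r)) :
  Mq Q B X0 (X0 + H) = Mq Q B X0 X0 +
    (cH H *m (Q + B) *m X0 + cH X0 *m (Q + B) *m H) + cH H *m Q *m H.
Proof.
rewrite /Mq !(cHD, cHB, cHN, mulmxDl, mulmxDr, mulmxBl, mulmxBr, mulmxN, mulNmx).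
mxring.
Qed.

Lemma Mq0 n r (Q B : 'M[C]_n) (X0 : 'M[C]_(n,r)) :
  Mq Q B X0 X0 = cH X0 *m (Q + B) *m X0.
Proof.
rewrite /Mq !(mulmxDl, mulmxDr).
mxring.
Qed.

End S.

Section S. Variable R : realType. Local Notation C := (R[i]). Implicit Types (a t : R).

Lemma herm_quad n r (Q : 'M[C]_n) (X : 'M[C]_(n,r)) : is_herm Q -> is_herm (cH X *m Q *m X).
Proof. by move/hermP=> HQ; apply/hermP; rewrite !cH_mul cHK HQ mulmxA. Qed.

Lemma hermD m (M N : 'M[C]_m) : is_herm M -> is_herm N -> is_herm (M + N).
Proof. by move/hermP=> HM /hermP HN; apply/hermP; rewrite cHD HM HN. Qed.
Lemma hermN m (M : 'M[C]_m) : is_herm M -> is_herm (- M).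
Proof. by move/hermP=> HM; apply/hermP; rewrite cHN HM. Qed.
Lemma hermB m (M N : 'M[C]_m) : is_herm M -> is_herm N -> is_herm (M - N).
Proof. by move=> HM HN; apply: hermD => //; apply: hermN. Qed.
Lemma hermZ m a (M : 'M[C]_m) : is_herm M -> is_herm (rC a *: M).
Proof. by move/hermP=> HM; apply/hermP; rewrite cHZ HM. Qed.

Lemma herm_Mq n r (Q B : 'M[C]_n) (X0 X : 'M[C]_(n,r)) :
  is_herm Q -> is_herm B -> is_herm (Mq Q B X0 X).
Proof.
move=> /hermP HQ /hermP HB; apply/hermP.
rewrite /Mq !(cHD, cHB, cHN, cH_mul, cHK) HQ HB !mulmxA; mxring.
Qed.

Lemma psd_herm m (P : 'M[C]_m) : psd P -> is_herm P.
Proof. by case. Qed.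

Lemma psd_quad n r (P : 'M[C]_n) (X : 'M[C]_(n,r)) : psd P -> psd (cH X *m P *m X).
Proof.
move=> [HP Hx]; split; first exact: herm_quad.
by move=> x; rewrite !mulmxA -cH_mul -!mulmxA mulmxA.
Qed.

Lemma psd_scale m a (P : 'M[C]_m) : 0 <= a -> psd P -> psd (rC a *: P).
Proof.
move=> a0 [HP Hx]; split; first exact: hermZ.
move=> x; rewrite -scalemxAr -scalemxAl mxE; apply: mulr_ge0 => //.
by rewrite /rC ler0c.
Qed.
Definition nu (z : C) : R := `|complex.Re z| + `|complex.Im z|.
Definition N1 m p (M : 'M[C]_(m,p)) : R := \sum_(i < m) \sum_(j < p) nu (M i j).

Lemma ReD (x y : C) : complex.Re (x + y) = complex.Re x + complex.Re y.
Proof. by case: x; case: y. Qed.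
Lemma ImD (x y : C) : complex.Im (x + y) = complex.Im x + complex.Im y.
Proof. by case: x; case: y. Qed.
Lemma ReN (x : C) : complex.Re (- x) = - complex.Re x.
Proof. by case: x. Qed.
Lemma ImN (x : C) : complex.Im (- x) = - complex.Im x.
Proof. by case: x. Qed.
Lemma ReM (x y : C) : complex.Re (x * y) = complex.Re x * complex.Re y - complex.Im x * complex.Im y.
Proof. by case: x; case: y. Qed.
Lemma ImM (x y : C) : complex.Im (x * y) = complex.Re x * complex.Im y + complex.Im x * complex.Re y.
Proof. by case: x => a b; case: y => c d /=. Qed.
Lemma RerC a : complex.Re (rC a) = a. Proof. by []. Qed.
Lemma ImrC a : complex.Im (rC a) = 0. Proof. by []. Qed.
Lemma ReJ (x : C) : complex.Re (x^*) = complex.Re x.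
Proof. by case: x. Qed.
Lemma ImJ (x : C) : complex.Im (x^*) = - complex.Im x.
Proof. by case: x. Qed.

Lemma nu_ge0 z : 0 <= nu z.
Proof. by rewrite /nu addr_ge0. Qed.
Lemma nuD z w : nu (z + w) <= nu z + nu w.
Proof.
rewrite /nu ReD ImD.
have := ler_normD (complex.Re z) (complex.Re w).
have := ler_normD (complex.Im z) (complex.Im w). lra.
Qed.
Lemma nuN z : nu (- z) = nu z.
Proof. by rewrite /nu ReN ImN !normrN. Qed.
Lemma nuJ z : nu (z^*) = nu z.
Proof. by rewrite /nu ReJ ImJ normrN. Qed.
Lemma nuM z w : nu (z * w) <= nu z * nu w.
Proof.
rewrite /nu ReM ImM.
set a := complex.Re z; set b := complex.Im z; set c := complex.Re w; set d := complex.Im w.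
have h1 := ler_normB (a * c) (b * d).
have h2 := ler_normD (a * d) (b * c).
rewrite !normrM in h1 h2.
have := normr_ge0 a; have := normr_ge0 b; have := normr_ge0 c; have := normr_ge0 d.
nra.
Qed.
Lemma nu_rC a z : nu (rC a * z) = `|a| * nu z.
Proof.
rewrite /nu ReM ImM RerC ImrC !mul0r subr0 addr0 !normrM; ring.
Qed.
Lemma Re_le_nu z : `|complex.Re z| <= nu z.
Proof. by rewrite /nu lerDl. Qed.
Lemma nu_sum (I : Type) (s : seq I) (P : pred I) (F : I -> C) :
  nu (\sum_(i <- s | P i) F i) <= \sum_(i <- s | P i) nu (F i).
Proof.
elim/big_rec2: _ => [|i y1 y2 _ H]; first by rewrite /nu /= normr0 addr0.
by apply: le_trans (nuD _ _) _; rewrite lerD2l.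
Qed.

Lemma N1_ge0 m p (M : 'M[C]_(m,p)) : 0 <= N1 M.
Proof. by apply: sumr_ge0 => i _; apply: sumr_ge0 => j _; apply: nu_ge0. Qed.

Lemma N1D m p (M N : 'M[C]_(m,p)) : N1 (M + N) <= N1 M + N1 N.
Proof.
rewrite /N1 -big_split /=; apply: ler_sum => i _.
rewrite -big_split /=; apply: ler_sum => j _; rewrite mxE; exact: nuD.
Qed.
Lemma N1N m p (M : 'M[C]_(m,p)) : N1 (- M) = N1 M.
Proof. by apply: eq_bigr => i _; apply: eq_bigr => j _; rewrite mxE nuN. Qed.
Lemma N1B m p (M N : 'M[C]_(m,p)) : N1 (M - N) <= N1 M + N1 N.
Proof. by rewrite -(N1N N) N1D. Qed.
Lemma N1Z m p a (M : 'M[C]_(m,p)) : N1 (rC a *: M) = `|a| * N1 M.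
Proof.
rewrite /N1 mulr_sumr; apply: eq_bigr => i _; rewrite mulr_sumr.
by apply: eq_bigr => j _; rewrite mxE nu_rC.
Qed.
Lemma N1_cH m p (M : 'M[C]_(m,p)) : N1 (cH M) = N1 M.
Proof.
rewrite /N1 exchange_big; apply: eq_bigr => i _; apply: eq_bigr => j _.
by rewrite /cH !mxE nuJ.
Qed.

Lemma entry_le_N1 m p (M : 'M[C]_(m,p)) i j : nu (M i j) <= N1 M.
Proof.
rewrite /N1 (bigD1 i) //= (bigD1 j) //= -addrA lerDl.
apply: addr_ge0; first by apply: sumr_ge0 => k _; apply: nu_ge0.
by apply: sumr_ge0 => k _; apply: sumr_ge0 => l _; apply: nu_ge0.
Qed.

Lemma row_le_N1 m p (M : 'M[C]_(m,p)) k : \sum_(j < p) nu (M k j) <= N1 M.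
Proof.
rewrite /N1 (bigD1 k) //= lerDl.
by apply: sumr_ge0 => i _; apply: sumr_ge0 => l _; apply: nu_ge0.
Qed.

Lemma N1_mul m p q (M : 'M[C]_(m,p)) (N : 'M[C]_(p,q)) : N1 (M *m N) <= N1 M * N1 N.
Proof.
rewrite /N1 mulr_suml; apply: ler_sum => i _.
apply: (@le_trans _ _ (\sum_(j < q) \sum_(k < p) nu (M i k) * nu (N k j))).
  apply: ler_sum => j _; rewrite mxE; apply: le_trans (nu_sum _ _ _) _.
  by apply: ler_sum => k _; apply: nuM.
rewrite exchange_big mulr_suml /=; apply: ler_sum => k _.
rewrite -mulr_sumr; apply: ler_wpM2l; first exact: nu_ge0.
exact: (row_le_N1 N k).
Qed.
End S.

Section S. Variable R : realType. Local Notation C := (R[i]). Implicit Types (a t : R).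
Lemma dsum_le m p (F : 'I_m -> 'I_p -> R) i j :
  (forall i j, 0 <= F i j) -> F i j <= \sum_(i < m) \sum_(j < p) F i j.
Proof.
move=> F0; rewrite (bigD1 i) //= (bigD1 j) //= -addrA lerDl.
apply: addr_ge0; first by apply: sumr_ge0 => k _; apply: F0.
by apply: sumr_ge0 => k _; apply: sumr_ge0 => l _; apply: F0.
Qed.

Lemma sqn_le_nu2 (z : C) : complex.Re z ^+ 2 + complex.Im z ^+ 2 <= nu z ^+ 2.
Proof.
rewrite /nu -(real_normK (num_real (complex.Re z))) -(real_normK (num_real (complex.Im z))).
have := normr_ge0 (complex.Re z); have := normr_ge0 (complex.Im z). nra.
Qed.

Lemma fnorm_ge0 m p (M : 'M[C]_(m,p)) : 0 <= fnorm M.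
Proof. exact: sqrtr_ge0. Qed.

Lemma fnorm_le_N1 m p (M : 'M[C]_(m,p)) : fnorm M <= N1 M.
Proof.
rewrite /fnorm -(ger0_norm (N1_ge0 M)) -sqrtr_sqr ler_wsqrtr //.
rewrite expr2 {2}/N1 mulr_sumr; apply: ler_sum => i _; rewrite mulr_sumr.
apply: ler_sum => j _; apply: le_trans (sqn_le_nu2 _) _.
rewrite expr2 mulrC ler_wpM2r ?nu_ge0 //; exact: entry_le_N1.
Qed.

Lemma nu_le_fnorm m p (M : 'M[C]_(m,p)) i j : nu (M i j) <= 2 * fnorm M.
Proof.
have H : forall x : R, x ^+ 2 <= complex.Re (M i j) ^+ 2 + complex.Im (M i j) ^+ 2 ->
  `|x| <= fnorm M.
  move=> x Hx; rewrite -sqrtr_sqr /fnorm ler_wsqrtr //; apply: le_trans Hx _.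
  rewrite (bigD1 i) //= (bigD1 j) //= -addrA lerDl.
  apply: addr_ge0; first by apply: sumr_ge0 => k _; rewrite addr_ge0 ?sqr_ge0.
  by apply: sumr_ge0 => k _; apply: sumr_ge0 => l _; rewrite addr_ge0 ?sqr_ge0.
have h1 : `|complex.Re (M i j)| <= fnorm M by apply: H; rewrite lerDl sqr_ge0.
have h2 : `|complex.Im (M i j)| <= fnorm M by apply: H; rewrite lerDr sqr_ge0.
rewrite /nu; lra.
Qed.

Lemma N1_le_fnorm m p (M : 'M[C]_(m,p)) : N1 M <= (2 * (m * p)%:R) * fnorm M.
Proof.
apply: (@le_trans _ _ (\sum_(i < m) \sum_(j < p) (2 * fnorm M))).
  by apply: ler_sum => i _; apply: ler_sum => j _; apply: nu_le_fnorm.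
rewrite sumr_const sumr_const !card_ord -mulrnA mulr_natr mulrC; lra.
Qed.

Lemma rtrD m (M N G : 'M[C]_m) : rtr (M + N) G = rtr M G + rtr N G.
Proof. by rewrite /rtr mulmxDl mxtraceD ReD. Qed.
Lemma rtrN m (M G : 'M[C]_m) : rtr (- M) G = - rtr M G.
Proof. by rewrite /rtr mulNmx linearN /= ReN. Qed.
Lemma rtrB m (M N G : 'M[C]_m) : rtr (M - N) G = rtr M G - rtr N G.
Proof. by rewrite rtrD rtrN. Qed.
Lemma rtrZ m a (M G : 'M[C]_m) : rtr (rC a *: M) G = a * rtr M G.
Proof. by rewrite /rtr -scalemxAl mxtraceZ ReM RerC ImrC mul0r subr0. Qed.
Lemma rtr0 m (G : 'M[C]_m) : rtr 0 G = 0.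
Proof. by rewrite /rtr mul0mx mxtrace0. Qed.

Lemma rtr_bound m (M G : 'M[C]_m) : `|rtr M G| <= N1 M * N1 G.
Proof.
apply: le_trans (N1_mul M G); apply: le_trans (Re_le_nu _) _.
rewrite /mxtrace; apply: le_trans (nu_sum _ _ _) _.
rewrite /N1; apply: ler_sum => i _.
rewrite (bigD1 i) //= lerDl.
by apply: sumr_ge0 => k _; apply: nu_ge0.
Qed.
End S.

Section S. Variable R : realType. Local Notation C := (R[i]). Implicit Types (a t : R).
Lemma lim_le (a b c : R) : (forall eps, 0 < eps -> a - eps * b <= c) -> 0 <= b -> a <= c.
Proof.
move=> H b0; rewrite leNgt; apply/negP => ca.
have e0 : 0 < (a - c) / (b + 1) by rewrite divr_gt0 // ?subr_gt0 // ltr_pwDr.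
have := H _ e0; set e := (a - c) / (b + 1) => h.
have he : e * (b + 1) = a - c by rewrite /e mulfVK // gt_eqF // ltr_pwDr.
nra.
Qed.

Lemma dir_deriv m (g : 'M[C]_m -> R) W0 G H : is_gradient g W0 G -> is_herm H ->
  forall eps, 0 < eps -> exists t, [/\ 0 < t, t <= 1 &
    `|g (W0 + rC t *: H) - g W0 - t * rtr H G| <= eps * t * N1 H].
Proof.
move=> [_ Hg] HH eps e0; have [d d0 Hd] := Hg eps e0.
have N0 := N1_ge0 H.
have den0 : 0 < 1 + d + N1 H by lra.
exists (d / (1 + d + N1 H)); set t := d / _.
have t0 : 0 < t by rewrite divr_gt0.
have tden : t * (1 + d + N1 H) = d by rewrite /t mulfVK // gt_eqF.
split => //; first by nra.
have hlt : fnorm (rC t *: H) < d.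
  apply: le_lt_trans (fnorm_le_N1 _) _; rewrite N1Z ger0_norm ?ltW //; nra.
have := Hd (rC t *: H) (hermZ t HH) hlt.
rewrite rtrZ => h; apply: le_trans h _; rewrite -mulrA; apply: ler_wpM2l; first exact: ltW.
by apply: le_trans (fnorm_le_N1 _) _; rewrite N1Z ger0_norm // ltW.
Qed.

Lemma lin_comb_eq m (W0 W : 'M[C]_m) t :
  W0 + rC t *: (W - W0) = rC t *: W + rC (1 - t) *: W0.
Proof. rewrite rC1B; move: (rC t) => s; apply/matrixP => i j; rewrite !mxE; ring. Qed.

Lemma grad_support m (g : 'M[C]_m -> R) W0 G W :
  convex_herm g -> is_gradient g W0 G -> is_herm W0 -> is_herm W ->
  g W0 + rtr (W - W0) G <= g W.
Proof.
move=> Hc Hg H0 HW.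
have HH : is_herm (W - W0) by apply: hermB.
suff : rtr (W - W0) G <= g W - g W0 by lra.
apply: (@lim_le _ (N1 (W - W0))); last exact: N1_ge0.
move=> eps e0; have [t [t0 t1 Ht]] := dir_deriv Hg HH e0.
have := Hc W W0 t HW H0 (ltW t0) t1; rewrite -lin_comb_eq => hc.
set u := g (W0 + _) in Ht hc; set r := rtr _ G in Ht *.
set N := N1 _ in Ht *.
have := ler_norm (- (u - g W0 - t * r)); rewrite normrN => hn.
have : t * (r - eps * N - (g W - g W0)) <= 0 by nra.
by rewrite pmulr_rle0 // subr_le0.
Qed.

Lemma grad_MND m (g : 'M[C]_m -> R) W0 G P :
  MND g -> is_gradient g W0 G -> is_herm W0 -> psd P -> 0 <= rtr P G.
Proof.
move=> Hm Hg H0 HP.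
apply: (@lim_le _ (N1 P)); last exact: N1_ge0.
move=> eps e0; have [t [t0 t1 Ht]] := dir_deriv Hg (psd_herm HP) e0.
have hm : g W0 <= g (W0 + rC t *: P).
  apply: Hm => //; first by apply: hermD => //; apply: hermZ; exact: psd_herm.
  rewrite /loewner_ge addrC addKr; apply: psd_scale => //; exact: ltW.
set u := g (W0 + _) in Ht hm; set r := rtr _ G in Ht *.
set N := N1 _ in Ht *.
have := ler_norm (u - g W0 - t * r) => hn.
have : t * (0 - eps * N - r) <= 0 by nra.
by rewrite pmulr_rle0 // subr_le0.
Qed.

Lemma grad_MNI m (g : 'M[C]_m -> R) W0 G P :
  MNI g -> is_gradient g W0 G -> is_herm W0 -> psd P -> rtr P G <= 0.
Proof.
move=> Hm Hg H0 HP.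
apply: (@lim_le _ (N1 P)); last exact: N1_ge0.
move=> eps e0; have [t [t0 t1 Ht]] := dir_deriv Hg (psd_herm HP) e0.
have hm : g (W0 + rC t *: P) <= g W0.
  apply: Hm => //; first by apply: hermD => //; apply: hermZ; exact: psd_herm.
  rewrite /loewner_ge addrC addKr; apply: psd_scale => //; exact: ltW.
set u := g (W0 + _) in Ht hm; set r := rtr _ G in Ht *.
set N := N1 _ in Ht *.
have := ler_norm (- (u - g W0 - t * r)); rewrite normrN => hn.
have : t * (r - eps * N - 0) <= 0 by nra.
by rewrite pmulr_rle0 // subr_le0.
Qed.
End S.

Section S. Variable R : realType. Local Notation C := (R[i]). Implicit Types (a t : R).
Definition Ql n (mnd : bool) (A : 'M[C]_n) := if mnd then neg_part A else pos_part A.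
Definition Bl n (mnd : bool) (A : 'M[C]_n) := if mnd then pos_part A else neg_part A.

Lemma LmatE n r mnd (A : 'M[C]_n) (X0 X : 'M[C]_(n,r)) :
  Lmat mnd A X0 X = Mq (Ql mnd A) (Bl mnd A) X0 X.
Proof. by case: mnd. Qed.

Lemma upperbE n r (g : 'M[C]_r -> R) mnd (A : 'M[C]_n) (X0 X : 'M[C]_(n,r)) :
  upperb g mnd A X0 X = g (Mq (Bl mnd A) (Ql mnd A) X0 X).
Proof. by case: mnd. Qed.

Lemma QBl n mnd (A : 'M[C]_n) : is_herm A -> Ql mnd A + Bl mnd A = A.
Proof. by move=> HA; case: mnd; rewrite /Ql /Bl ?pos_neg // addrC pos_neg. Qed.
Lemma BQl n mnd (A : 'M[C]_n) : is_herm A -> Bl mnd A + Ql mnd A = A.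
Proof. by move=> HA; rewrite addrC QBl. Qed.

Lemma herm_neg n (A : 'M[C]_n) : is_herm (neg_part A).
Proof. by rewrite -[neg_part A]opprK; apply: hermN; apply: psd_herm (neg_nsd A). Qed.
Lemma herm_pos n (A : 'M[C]_n) : is_herm (pos_part A).
Proof. exact: psd_herm (pos_psd A). Qed.
Lemma herm_Ql n mnd (A : 'M[C]_n) : is_herm (Ql mnd A).
Proof. by case: mnd; [exact: herm_neg | exact: herm_pos]. Qed.
Lemma herm_Bl n mnd (A : 'M[C]_n) : is_herm (Bl mnd A).
Proof. by case: mnd; [exact: herm_pos | exact: herm_neg]. Qed.

Lemma W_minus_Mq n r (Q B A : 'M[C]_n) (X0 X : 'M[C]_(n,r)) : Q + B = A ->
  cH X *m A *m X - Mq Q B X0 X = cH (X - X0) *m B *m (X - X0).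
Proof. by move=> <-; rewrite MqE opprB addrC subrK. Qed.

Lemma Mq_minus_W n r (Q B A : 'M[C]_n) (X0 X : 'M[C]_(n,r)) : Q + B = A ->
  Mq Q B X0 X - cH X *m A *m X = cH (X - X0) *m (- B) *m (X - X0).
Proof. by move=> <-; rewrite MqE addrAC subrr add0r mulmxN mulNmx. Qed.

Lemma psd_negq n r (X : 'M[C]_(n,r)) (A : 'M[C]_n) : psd (cH X *m (- neg_part A) *m X).
Proof. exact/psd_quad/neg_nsd. Qed.
Lemma psd_posq n r (X : 'M[C]_(n,r)) (A : 'M[C]_n) : psd (cH X *m pos_part A *m X).
Proof. exact/psd_quad/pos_psd. Qed.

Lemma lowerbE n r (g : 'M[C]_r -> R) Dg mnd (A : 'M[C]_n) (X0 X : 'M[C]_(n,r)) :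
  lowerb g Dg mnd A X0 X =
  g (cH X0 *m A *m X0) + rtr (Mq (Ql mnd A) (Bl mnd A) X0 X - cH X0 *m A *m X0) (Dg (cH X0 *m A *m X0)).
Proof. by rewrite /lowerb /= LmatE [in RHS]rtrB; lra. Qed.

Lemma lower_le n r (g : 'M[C]_r -> R) Dg mnd (A : 'M[C]_n) (X0 X : 'M[C]_(n,r)) :
  is_herm A -> in_family g Dg mnd ->
  lowerb g Dg mnd A X0 X <= g (cH X *m A *m X).
Proof.
move=> HA [Hc [Hg Hm]].
have HW0 : is_herm (cH X0 *m A *m X0) by apply: herm_quad.
have HM : is_herm (Mq (Ql mnd A) (Bl mnd A) X0 X) by apply: herm_Mq; [apply: herm_Ql | apply: herm_Bl].
have hW : is_herm (cH X *m A *m X) by exact: herm_quad.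
rewrite lowerbE; apply: le_trans (grad_support Hc (Hg _ HW0) HW0 HM) _.
case: mnd Hm HM => Hm HM.
- apply: (Hm _ _ hW HM).
  by rewrite /loewner_ge (W_minus_Mq _ _ (QBl true HA)); apply: psd_posq.
- apply: (Hm _ _ HM hW).
  by rewrite /loewner_ge (Mq_minus_W _ _ (QBl false HA)); apply: psd_negq.
Qed.

Lemma upper_ge n r (g : 'M[C]_r -> R) Dg mnd (A : 'M[C]_n) (X0 X : 'M[C]_(n,r)) :
  is_herm A -> in_family g Dg mnd ->
  g (cH X *m A *m X) <= upperb g mnd A X0 X.
Proof.
move=> HA [Hc [Hg Hm]].
have HM : is_herm (Mq (Bl mnd A) (Ql mnd A) X0 X) by apply: herm_Mq; [apply: herm_Bl | apply: herm_Ql].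
have hW : is_herm (cH X *m A *m X) by exact: herm_quad.
rewrite upperbE; case: mnd Hm HM => Hm HM.
- apply: (Hm _ _ HM hW).
  by rewrite /loewner_ge (Mq_minus_W _ _ (BQl true HA)); apply: psd_negq.
- apply: (Hm _ _ hW HM).
  by rewrite /loewner_ge (W_minus_Mq _ _ (BQl false HA)); apply: psd_posq.
Qed.

Lemma lower_eq n r (g : 'M[C]_r -> R) Dg mnd (A : 'M[C]_n) (X0 : 'M[C]_(n,r)) :
  is_herm A -> lowerb g Dg mnd A X0 X0 = g (cH X0 *m A *m X0).
Proof. by move=> HA; rewrite lowerbE Mq0 QBl // subrr rtr0 addr0. Qed.

Lemma upper_eq n r (g : 'M[C]_r -> R) mnd (A : 'M[C]_n) (X0 : 'M[C]_(n,r)) :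
  is_herm A -> upperb g mnd A X0 X0 = g (cH X0 *m A *m X0).
Proof. by move=> HA; rewrite upperbE Mq0 BQl. Qed.

Definition convex_on m p (h : 'M[C]_(m,p) -> R) : Prop :=
  forall X Y t, 0 <= t -> t <= 1 ->
    h (rC t *: X + rC (1 - t) *: Y) <= t * h X + (1 - t) * h Y.

Lemma rtr_conv n r (Q B : 'M[C]_n) (X0 X Y : 'M[C]_(n,r)) G t :
  t * rtr (Mq Q B X0 X) G + (1 - t) * rtr (Mq Q B X0 Y) G
   - rtr (Mq Q B X0 (rC t *: X + rC (1 - t) *: Y)) G
  = t * (1 - t) * rtr (cH (X - Y) *m Q *m (X - Y)) G.
Proof.
have := congr1 (fun M => rtr M G) (Mq_conv Q B X0 X Y t).
by rewrite /= !(rtrB, rtrD, rtrZ).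
Qed.

Lemma conc_arith (t g0 w a b c q : R) : 0 <= t -> t <= 1 ->
  t * a + (1 - t) * b - c = t * (1 - t) * q -> q <= 0 ->
  t * (g0 + (a - w)) + (1 - t) * (g0 + (b - w)) <= g0 + (c - w).
Proof.
move=> t0 t1 key q0.
have h : t * (1 - t) * q <= 0 by apply: mulr_ge0_le0 => //; apply: mulr_ge0; lra.
have e : t * (g0 + (a - w)) + (1 - t) * (g0 + (b - w)) - (g0 + (c - w)) = t * a + (1 - t) * b - c by ring.
lra.
Qed.

Lemma lowerbE2 n r (g : 'M[C]_r -> R) Dg mnd (A : 'M[C]_n) (X0 X : 'M[C]_(n,r)) :
  lowerb g Dg mnd A X0 X =
  g (cH X0 *m A *m X0) + (rtr (Mq (Ql mnd A) (Bl mnd A) X0 X) (Dg (cH X0 *m A *m X0))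
     - rtr (cH X0 *m A *m X0) (Dg (cH X0 *m A *m X0))).
Proof. by rewrite /lowerb /= LmatE; lra. Qed.

Lemma lower_concave n r (g : 'M[C]_r -> R) Dg mnd (A : 'M[C]_n) (X0 : 'M[C]_(n,r)) :
  is_herm A -> in_family g Dg mnd -> concave_on (lowerb g Dg mnd A X0).
Proof.
move=> HA [Hc [Hg Hm]] X Y t t0 t1.
have HW0 : is_herm (cH X0 *m A *m X0) by apply: herm_quad.
rewrite !lowerbE2.
have key := rtr_conv (Ql mnd A) (Bl mnd A) X0 X Y (Dg (cH X0 *m A *m X0)) t.
apply: (conc_arith _ _ t0 t1 key).
case: mnd Hm key => Hm _ /=.
- rewrite -[neg_part A]opprK mulmxN mulNmx rtrN oppr_le0.
  exact: grad_MND Hm (Hg _ HW0) HW0 (psd_negq _ _).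
- exact: grad_MNI Hm (Hg _ HW0) HW0 (psd_posq _ _).
Qed.

Lemma upper_convex n r (g : 'M[C]_r -> R) Dg mnd (A : 'M[C]_n) (X0 : 'M[C]_(n,r)) :
  is_herm A -> in_family g Dg mnd -> convex_on (upperb g mnd A X0).
Proof.
move=> HA [Hc [Hg Hm]] X Y t t0 t1.
rewrite !upperbE.
set MX := Mq _ _ X0 X; set MY := Mq _ _ X0 Y; set MZ := Mq _ _ X0 (_ + _).
have HQ := herm_Ql mnd A; have HB := herm_Bl mnd A.
have hX : is_herm MX by apply: herm_Mq.
have hY : is_herm MY by apply: herm_Mq.
have hZ : is_herm MZ by apply: herm_Mq.
have hC : is_herm (rC t *: MX + rC (1 - t) *: MY) by apply: hermD; apply: hermZ.
have tt : 0 <= t * (1 - t) by apply: mulr_ge0 => //; rewrite subr_ge0.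
have key := Mq_conv (Bl mnd A) (Ql mnd A) X0 X Y t.
apply: le_trans (Hc _ _ _ hX hY t0 t1).
clear HQ HB.
case: mnd Hm key @MX @MY @MZ hX hY hZ hC => /= Hm key hX hY hZ hC.
- apply: (Hm _ _ hC hZ); rewrite /loewner_ge key; apply: psd_scale => //; exact: psd_posq.
- apply: (Hm _ _ hZ hC); rewrite /loewner_ge -opprB key -scalerN -mulNmx -mulmxN.
  by apply: psd_scale => //; exact: psd_negq.
Qed.
End S.

Section S. Variable R : realType. Local Notation C := (R[i]). Implicit Types (a t : R).
Lemma lin_rlinear n r (S : 'M[C]_n) (X0 : 'M[C]_(n,r)) G :
  rlinear (fun H => rtr (cH H *m S *m X0 + cH X0 *m S *m H) G).
Proof.
split => [H1 H2|a H].
- rewrite cHD !(mulmxDl, mulmxDr).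
  rewrite !rtrD.
  by rewrite addrACA.
- by rewrite cHZ -!scalemxAl -scalemxAr -scalerDr rtrZ.
Qed.

Lemma fderiv_ext m p (f h : 'M[C]_(m,p) -> R) X0 D D' :
  (forall X, f X = h X) -> (forall H, D H = D' H) -> has_fderiv f X0 D -> has_fderiv h X0 D'.
Proof.
move=> ef eD [[l1 l2] Hd]; split.
  by split => [X Y|a X]; rewrite -!eD ?l1 ?l2.
move=> eps e0; have [d d0 H] := Hd eps e0; exists d => // H0 hH0.
by rewrite -!ef -eD; apply: H.
Qed.

Lemma fderiv_add m p (f h : 'M[C]_(m,p) -> R) X0 D1 D2 :
  has_fderiv f X0 D1 -> has_fderiv h X0 D2 ->
  has_fderiv (fun X => f X + h X) X0 (fun H => D1 H + D2 H).
Proof.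
move=> [[a1 b1] H1] [[a2 b2] H2]; split.
  split => [X Y|a X]; first by rewrite a1 a2; lra.
  by rewrite b1 b2; lra.
move=> eps e0.
have e2 : 0 < eps / 2 by rewrite divr_gt0.
have [d1 d10 K1] := H1 _ e2; have [d2 d20 K2] := H2 _ e2.
exists (Num.min d1 d2); first by rewrite lt_min d10 d20.
move=> H; rewrite lt_min => /andP [h1 h2].
have k1 := K1 H h1; have k2 := K2 H h2.
set u := f (X0 + H) - f X0 - D1 H in k1; set v := h (X0 + H) - h X0 - D2 H in k2.
have -> : f (X0 + H) + h (X0 + H) - (f X0 + h X0) - (D1 H + D2 H) = u + v by rewrite /u /v; ring.
apply: le_trans (ler_normD _ _) _.
have -> : eps * fnorm H = eps / 2 * fnorm H + eps / 2 * fnorm H.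
  by rewrite -mulrDl -splitr.
exact: lerD.
Qed.

Lemma fderiv_scale m p (f : 'M[C]_(m,p) -> R) X0 D c :
  has_fderiv f X0 D -> has_fderiv (fun X => c * f X) X0 (fun H => c * D H).
Proof.
move=> [[a1 b1] H1]; split.
  split => [X Y|a X]; first by rewrite a1; ring.
  by rewrite b1; ring.
move=> eps e0.
have c0 : 0 < `|c| + 1 by rewrite ltr_pwDr // normr_ge0.
have e2 : 0 < eps / (`|c| + 1) by rewrite divr_gt0.
have [d d0 K] := H1 _ e2; exists d => // H hH.
have k := K H hH.
have -> : c * f (X0 + H) - c * f X0 - c * D H = c * (f (X0 + H) - f X0 - D H) by ring.
rewrite normrM; apply: le_trans (ler_wpM2l (normr_ge0 c) k) _.
rewrite mulrA; apply: ler_wpM2r; first exact: fnorm_ge0.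
have hx : eps / (`|c| + 1) * (`|c| + 1) = eps by rewrite mulfVK // gt_eqF.
move: hx (ltW e2) (normr_ge0 c); set x := eps / _; move=> hx x0 nc.
nra.
Qed.
End S.

Section S. Variable R : realType. Local Notation C := (R[i]). Implicit Types (a t : R).
Lemma fderiv_zero m p (X0 : 'M[C]_(m,p)) : has_fderiv (fun _ => 0) X0 (fun _ => 0).
Proof.
split; first by split => [X Y|a X]; rewrite ?addr0 ?mulr0.
move=> eps e0; exists 1 => // H _; rewrite !subrr normr0.
by apply: mulr_ge0; [exact: ltW | exact: fnorm_ge0].
Qed.

Lemma fderiv_sum m p (I : Type) (s : seq I) (P : pred I) (F : I -> 'M[C]_(m,p) -> R)
  (D : I -> 'M[C]_(m,p) -> R) X0 :
  (forall i, P i -> has_fderiv (F i) X0 (D i)) ->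
  has_fderiv (fun X => \sum_(i <- s | P i) F i X) X0 (fun H => \sum_(i <- s | P i) D i H).
Proof.
move=> HF; elim: s => [|i s IH].
  by apply: fderiv_ext (fderiv_zero X0) => X; rewrite big_nil.
case Pi: (P i).
- apply: fderiv_ext (fderiv_add (HF i Pi) IH) => X; by rewrite big_cons Pi.
- by apply: fderiv_ext IH => X; rewrite big_cons Pi.
Qed.

Lemma chain_arith (eps e1 c1 k cG f nu x y NQG : R) :
  0 < eps -> 0 <= f -> 0 <= nu -> nu <= k * f -> 1 <= k -> 1 <= c1 ->
  e1 * (2 * c1 * k) = eps -> 0 <= e1 ->
  x <= e1 * (c1 * nu) ->
  y <= nu * nu * NQG -> 0 <= NQG -> NQG <= cG ->
  f * (2 * k * k * cG) <= eps ->
  x + y <= eps * f.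
Proof.
move=> e0 f0 nu0 nuk k1 c11 he1 e10 hx hy nq nqc hf.
have h1 : x <= eps / 2 * f.
  apply: le_trans hx _.
  have : e1 * (c1 * nu) <= e1 * (c1 * (k * f)).
    by apply: ler_wpM2l => //; apply: ler_wpM2l => //; lra.
  move=> h; apply: le_trans h _.
  have -> : e1 * (c1 * (k * f)) = (e1 * (2 * c1 * k)) / 2 * f by field.
  by rewrite he1.
have h2 : y <= eps / 2 * f.
  apply: le_trans hy _.
  have a1 : nu * nu <= (k * f) * (k * f) by apply: ler_pM.
  have a2 : nu * nu * NQG <= (k * f) * (k * f) * cG.
    apply: ler_pM => //; apply: mulr_ge0 => //.
  apply: le_trans a2 _.
  have -> : k * f * (k * f) * cG = f * (2 * k * k * cG) / 2 * f by field.
  by apply: ler_wpM2r => //; apply: ler_wpM2r => //; rewrite invr_ge0.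
have -> : eps * f = eps / 2 * f + eps / 2 * f by rewrite -mulrDl -splitr.
exact: lerD.
Qed.
End S.

Section S. Variable R : realType. Local Notation C := (R[i]). Implicit Types (a t : R).
Lemma addKmx m p (a b c : 'M[C]_(m,p)) : b + c = a + b + c - a.
Proof. by apply/matrixP => i j; rewrite !mxE; ring. Qed.

Lemma chain n r (phi : 'M[C]_r -> R) (Q B : 'M[C]_n) (X0 : 'M[C]_(n,r)) G :
  is_herm Q -> is_herm B -> is_gradient phi (Mq Q B X0 X0) G ->
  has_fderiv (fun X => phi (Mq Q B X0 X)) X0
    (fun H => rtr (cH H *m (Q + B) *m X0 + cH X0 *m (Q + B) *m H) G).
Proof.
move=> HQ HB [HG Hg]; split; first exact: lin_rlinear.
move=> eps e0.
set S := Q + B.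
pose c1 : R := 2 * N1 S * N1 X0 + N1 Q + 1.
pose k : R := 2 * (n * r)%:R + 1.
pose cG : R := N1 Q * N1 G + 1.
have NS := N1_ge0 S; have NX := N1_ge0 X0; have NQ := N1_ge0 Q; have NG := N1_ge0 G.
have c11 : 1 <= c1 by rewrite /c1 lerDr; apply: addr_ge0 => //; apply: mulr_ge0 => //; apply: mulr_ge0.
have k1 : 1 <= k by rewrite /k lerDr; apply: mulr_ge0.
have cG1 : 1 <= cG by rewrite /cG lerDr; apply: mulr_ge0.
have c1p : 0 < c1 by apply: lt_le_trans c11.
have kp : 0 < k by apply: lt_le_trans k1.
have cGp : 0 < cG by apply: lt_le_trans cG1.
have den1 : 0 < 2 * c1 * k by rewrite !mulr_gt0.
have e1p : 0 < eps / (2 * c1 * k) by rewrite divr_gt0.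
have [d1 d10 K] := Hg _ e1p.
have den2 : 0 < 2 * k * k * cG by rewrite !mulr_gt0.
have den3 : 0 < c1 * k by rewrite mulr_gt0.
exists (Num.min (d1 / (c1 * k)) (Num.min (1 / k) (eps / (2 * k * k * cG)))).
  by rewrite !lt_min !divr_gt0.
move=> H; rewrite !lt_min => /andP [hd1 /andP [hk he]].
rewrite ltr_pdivlMr // in hd1; rewrite ltr_pdivlMr // in hk.
rewrite ltr_pdivlMr // in he.
set f := fnorm H in hd1 hk he *; set nu := N1 H.
have f0 : 0 <= f := fnorm_ge0 H.
have nu0 : 0 <= nu := N1_ge0 H.
have hnu : nu <= k * f.
  apply: le_trans (N1_le_fnorm H) _; rewrite -/f ler_wpM2r // /k lerDl //.
have nu1 : nu <= 1 by apply: le_trans hnu _; rewrite mulrC ltW.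
rewrite Mq_shift.
set W0 := Mq Q B X0 X0; set L := cH H *m S *m X0 + cH X0 *m S *m H; set q := cH H *m Q *m H.
have hP : is_herm (L + q).
  have -> : L + q = Mq Q B X0 (X0 + H) - W0.
    by rewrite Mq_shift; apply: addKmx.
  by apply: hermB; apply: herm_Mq.
have NL : N1 L <= 2 * N1 S * N1 X0 * nu.
  apply: le_trans (N1D _ _) _.
  have a1 : N1 (cH H *m S *m X0) <= nu * N1 S * N1 X0.
    apply: le_trans (N1_mul _ _) _; apply: ler_wpM2r => //.
    by apply: le_trans (N1_mul _ _) _; rewrite N1_cH.
  have a2 : N1 (cH X0 *m S *m H) <= N1 X0 * N1 S * nu.
    apply: le_trans (N1_mul _ _) _; apply: ler_wpM2r => //.
    by apply: le_trans (N1_mul _ _) _; rewrite N1_cH.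
  have -> : 2 * N1 S * N1 X0 * nu = nu * N1 S * N1 X0 + N1 X0 * N1 S * nu by ring.
  exact: lerD.
have Nq : N1 q <= nu * N1 Q * nu.
  apply: le_trans (N1_mul _ _) _; apply: ler_wpM2r => //.
  by apply: le_trans (N1_mul _ _) _; rewrite N1_cH.
have NP : fnorm (L + q) <= c1 * nu.
  apply: le_trans (fnorm_le_N1 _) _; apply: le_trans (N1D _ _) _.
  have b1 : nu * N1 Q * nu <= N1 Q * nu.
    have -> : nu * N1 Q * nu = N1 Q * nu * nu by ring.
    by rewrite -[X in _ <= X]mulr1; apply: ler_wpM2l => //; apply: mulr_ge0.
  have -> : c1 * nu = 2 * N1 S * N1 X0 * nu + N1 Q * nu + nu by rewrite /c1; ring.
  by apply: le_trans (lerD NL (le_trans Nq b1)) _; rewrite lerDl.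
have fP : fnorm (L + q) < d1.
  apply: le_lt_trans NP _; apply: le_lt_trans hd1.
  have -> : f * (c1 * k) = c1 * (k * f) by ring.
  by apply: ler_wpM2l => //; apply: ltW.
have k1' := K (L + q) hP fP.
have kq := rtr_bound q G.
have -> : phi (W0 + L + q) - phi W0 - rtr L G =
  (phi (W0 + (L + q)) - phi W0 - rtr (L + q) G) + rtr q G.
  rewrite (addrA W0 L q) [rtr (L + q) G]rtrD.
  by move: (phi (W0 + L + q)) (phi W0) (rtr L G) (rtr q G) => a b c d; ring.
apply: le_trans (ler_normD _ _) _.
apply: (@chain_arith _ eps (eps / (2 * c1 * k)) c1 k cG f nu _ _ (N1 Q * N1 G)) => //.
- by rewrite mulfVK // gt_eqF.
- exact: ltW.
- apply: le_trans k1' _; apply: ler_wpM2l; [exact: ltW | exact: NP].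
- apply: le_trans kq _.
  have -> : nu * nu * (N1 Q * N1 G) = nu * N1 Q * nu * N1 G by ring.
  first [ by apply: ler_wpM2r | by apply: (ler_wpM2r NG) | by rewrite ler_wpM2r | (apply: ler_pM => //; apply: mulr_ge0 => //; apply: mulr_ge0) ].
- by apply: mulr_ge0.
- by rewrite /cG lerDl.
- exact: ltW.
Qed.
End S.

Section S. Variable R : realType. Local Notation C := (R[i]). Implicit Types (a t : R).
Lemma split_sum K (a F : 'I_K -> R) :
  \sum_(k < K) a k * F k = \sum_(k < K | 0 < a k) a k * F k + \sum_(k < K | a k < 0) a k * F k.
Proof.
rewrite (bigID (fun k => 0 < a k)) /=; congr (_ + _).
rewrite (bigID (fun k => a k < 0)) /= [X in _ + X]big1 ?addr0.
  by apply: eq_bigl => k /=; case: (ltgtP (a k) 0).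
by move=> k; case: (ltgtP (a k) 0) => // ->; rewrite mul0r.
Qed.

Lemma concave_add m p (f h : 'M[C]_(m,p) -> R) :
  concave_on f -> concave_on h -> concave_on (fun X => f X + h X).
Proof.
move=> cf ch X Y t t0 t1; have := cf X Y t t0 t1; have := ch X Y t t0 t1.
move: (f X) (f Y) (h X) (h Y) (f (rC t *: X + rC (1 - t) *: Y)) (h (rC t *: X + rC (1 - t) *: Y)) => a b c d e u h1 h2.
have -> : t * (a + c) + (1 - t) * (b + d) = (t * a + (1 - t) * b) + (t * c + (1 - t) * d) by ring.
exact: lerD.
Qed.

Lemma concave_zero m p : concave_on (fun _ : 'M[C]_(m,p) => 0).
Proof. by move=> X Y t _ _; rewrite !mulr0 addr0. Qed.

Lemma concave_sum m p (I : Type) (s : seq I) (P : pred I) (F : I -> 'M[C]_(m,p) -> R) :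
  (forall i, P i -> concave_on (F i)) -> concave_on (fun X => \sum_(i <- s | P i) F i X).
Proof.
move=> HF; elim: s => [|i s IH].
  by move=> X Y t t0 t1; rewrite !big_nil !mulr0 addr0.
move=> X Y t t0 t1; rewrite !big_cons; case Pi: (P i); last exact: IH.
exact: (concave_add (HF i Pi) IH).
Qed.

Lemma concave_scale m p (h : 'M[C]_(m,p) -> R) c :
  0 <= c -> concave_on h -> concave_on (fun X => c * h X).
Proof.
move=> c0 ch X Y t t0 t1; have := ch X Y t t0 t1.
move: (h X) (h Y) (h (rC t *: X + rC (1 - t) *: Y)) => a b e h1.
have -> : t * (c * a) + (1 - t) * (c * b) = c * (t * a + (1 - t) * b) by ring.
exact: ler_wpM2l.
Qed.

Lemma convex_scale m p (h : 'M[C]_(m,p) -> R) c :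
  c <= 0 -> convex_on h -> concave_on (fun X => c * h X).
Proof.
move=> c0 ch X Y t t0 t1; have := ch X Y t t0 t1.
move: (h X) (h Y) (h (rC t *: X + rC (1 - t) *: Y)) => a b e h1.
have -> : t * (c * a) + (1 - t) * (c * b) = c * (t * a + (1 - t) * b) by ring.
exact: ler_wnM2l.
Qed.

Lemma MqA0 n r (A : 'M[C]_n) (X0 X : 'M[C]_(n,r)) : Mq A 0 X0 X = cH X *m A *m X.
Proof. by rewrite /Mq !(mulmx0, mul0mx) !addr0 subr0. Qed.

Lemma grad_affine m (W0 G : 'M[C]_m) (c : R) :
  is_herm G -> is_gradient (fun W => rtr W G + c) W0 G.
Proof.
move=> HG; split => // eps e0; exists 1 => // H _ _.
rewrite rtrD.
have -> : rtr W0 G + rtr H G + c - (rtr W0 G + c) - rtr H G = 0 by ring.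
by rewrite normr0; apply: mulr_ge0; [exact: ltW | exact: fnorm_ge0].
Qed.
End S.

Section S. Variable R : realType. Local Notation C := (R[i]). Implicit Types (a t : R).
Definition Dk n r (A : 'M[C]_n) (Dg : 'M[C]_r -> 'M[C]_r) (X0 : 'M[C]_(n,r)) (H : 'M[C]_(n,r)) : R :=
  rtr (cH H *m A *m X0 + cH X0 *m A *m H) (Dg (cH X0 *m A *m X0)).

Lemma herm0 m : is_herm (0 : 'M[C]_m).
Proof. by apply/hermP; rewrite /cH trmx0 map_mx0. Qed.

Lemma deriv_W n r (g : 'M[C]_r -> R) Dg mnd (A : 'M[C]_n) (X0 : 'M[C]_(n,r)) :
  is_herm A -> in_family g Dg mnd -> has_fderiv (fun X => g (cH X *m A *m X)) X0 (Dk A Dg X0).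
Proof.
move=> HA [_ [Hg _]].
have HW0 : is_herm (cH X0 *m A *m X0) by apply: herm_quad.
have G0 : is_gradient g (Mq A 0 X0 X0) (Dg (cH X0 *m A *m X0)) by rewrite MqA0; apply: Hg.
have h := chain HA (herm0 n) G0.
by apply: fderiv_ext h => [X|H]; rewrite ?MqA0 ?addr0.
Qed.

Lemma deriv_lower n r (g : 'M[C]_r -> R) Dg mnd (A : 'M[C]_n) (X0 : 'M[C]_(n,r)) :
  is_herm A -> in_family g Dg mnd -> has_fderiv (lowerb g Dg mnd A X0) X0 (Dk A Dg X0).
Proof.
move=> HA [_ [Hg _]].
have HW0 : is_herm (cH X0 *m A *m X0) by apply: herm_quad.
have [HG _] := Hg _ HW0.
set W0 := cH X0 *m A *m X0; set G := Dg W0.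
have G0 := @grad_affine _ _ (Mq (Ql mnd A) (Bl mnd A) X0 X0) G (g W0 - rtr W0 G) HG.
have h := chain (herm_Ql mnd A) (herm_Bl mnd A) G0.
apply: fderiv_ext h => [X|H]; last by rewrite QBl.
by rewrite /lowerb /= LmatE addrA.
Qed.

Lemma deriv_upper n r (g : 'M[C]_r -> R) Dg mnd (A : 'M[C]_n) (X0 : 'M[C]_(n,r)) :
  is_herm A -> in_family g Dg mnd -> has_fderiv (upperb g mnd A X0) X0 (Dk A Dg X0).
Proof.
move=> HA [_ [Hg _]].
have HW0 : is_herm (cH X0 *m A *m X0) by apply: herm_quad.
have G0 : is_gradient g (Mq (Bl mnd A) (Ql mnd A) X0 X0) (Dg (cH X0 *m A *m X0)).
  by rewrite Mq0 BQl //; apply: Hg.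
have h := chain (herm_Bl mnd A) (herm_Ql mnd A) G0.
by apply: fderiv_ext h => [X|H]; rewrite ?upperbE ?BQl.
Qed.
End S.

Unset Implicit Arguments.
Set Strict Implicit.
Set Printing Implicit Defensive.

Theorem mainTheorem3 (R : realType) (n r K : nat) (alpha : 'I_K -> R)
  (A : 'I_K -> 'M[R[i]]_n) (g : 'I_K -> 'M[R[i]]_r -> R)
  (Dg : 'I_K -> 'M[R[i]]_r -> 'M[R[i]]_r) (mnd : 'I_K -> bool)
  (X0 : 'M[R[i]]_(n, r)) :
  (forall k, is_herm (A k)) ->
  (forall k, in_family (g k) (Dg k) (mnd k)) ->
  [/\ concave_on (fbar alpha A g Dg mnd X0),
      (forall X, fbar alpha A g Dg mnd X0 X <= gqmf alpha A g X),
      fbar alpha A g Dg mnd X0 X0 = gqmf alpha A g X0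
    & exists D : 'M[R[i]]_(n, r) -> R,
        has_fderiv (gqmf alpha A g) X0 D /\
        has_fderiv (fbar alpha A g Dg mnd X0) X0 D].
Proof.
move=> HA Hf; split.
- rewrite /fbar.
  apply: (concave_add
    (f := fun X => \sum_(k < K | 0 < alpha k) alpha k * lowerb (g k) (Dg k) (mnd k) (A k) X0 X)
    (h := fun X => \sum_(k < K | alpha k < 0) alpha k * upperb (g k) (mnd k) (A k) X0 X)).
  + apply: (@concave_sum R n r 'I_K (index_enum 'I_K) (fun k => 0 < alpha k)
      (fun k X => alpha k * lowerb (g k) (Dg k) (mnd k) (A k) X0 X)) => k Pk.
    apply: concave_scale; [exact: ltW Pk | exact: lower_concave X0 (HA k) (Hf k)].
  + apply: (@concave_sum R n r 'I_K (index_enum 'I_K) (fun k => alpha k < 0)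
      (fun k X => alpha k * upperb (g k) (mnd k) (A k) X0 X)) => k Pk.
    apply: convex_scale; [exact: ltW Pk | exact: upper_convex X0 (HA k) (Hf k)].
- move=> X; rewrite /fbar /gqmf (split_sum alpha (fun k => g k (cH X *m A k *m X))).
  apply: lerD; apply: ler_sum => k Pk.
  + by apply: ler_wpM2l; [exact: ltW | exact: lower_le X0 X (HA k) (Hf k)].
  + by apply: ler_wnM2l; [exact: ltW | exact: upper_ge X0 X (HA k) (Hf k)].
- rewrite /fbar /gqmf (split_sum alpha (fun k => g k (cH X0 *m A k *m X0))).
  congr (_ + _); apply: eq_bigr => k _; first by rewrite lower_eq.
  by rewrite upper_eq.
- exists (fun H => \sum_(k < K) alpha k * Dk (A k) (Dg k) X0 H); split.
  + have h := @fderiv_sum R n r 'I_K (index_enum 'I_K) xpredT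
      (fun k X => alpha k * g k (cH X *m A k *m X))
      (fun k H => alpha k * Dk (A k) (Dg k) X0 H) X0
      (fun k _ => fderiv_scale (alpha k) (deriv_W X0 (HA k) (Hf k))).
    exact: fderiv_ext h.
  + have h1 := @fderiv_sum R n r 'I_K (index_enum 'I_K) (fun k => 0 < alpha k)
      (fun k X => alpha k * lowerb (g k) (Dg k) (mnd k) (A k) X0 X)
      (fun k H => alpha k * Dk (A k) (Dg k) X0 H) X0
      (fun k _ => fderiv_scale (alpha k) (deriv_lower X0 (HA k) (Hf k))).
    have h2 := @fderiv_sum R n r 'I_K (index_enum 'I_K) (fun k => alpha k < 0)
      (fun k X => alpha k * upperb (g k) (mnd k) (A k) X0 X)
      (fun k H => alpha k * Dk (A k) (Dg k) X0 H) X0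
      (fun k _ => fderiv_scale (alpha k) (deriv_upper X0 (HA k) (Hf k))).
    apply: fderiv_ext (fderiv_add h1 h2) => // H.
    by rewrite (split_sum alpha (fun k => Dk (A k) (Dg k) X0 H)).
Qed.
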